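(* Let $n\ge 2$, let $X\subset\mathbb{R}^n$ be finite with the Euclidean metric $d$, let $\epsilon>0$ and let $A\subset X$. Let $x\in X\setminus A$ and $r\in\mathbb{N}\cup\{0\}$. Then for any $p\in A\setminus(\partial A)^{\mathfrak{n}+r}_A$ there exists $a\in(\partial A)_A$ such that \[ d(p,x)>d(a,x)+r\frac{\epsilon}{2\sqrt n}. \] In particular, for any $x\in X\setminus A$ and $p\in A$, there exists $a\in(\partial A)^{\mathfrak{n}}_A$ such that $d(a,x)\le d(p,x)$.
   Context: $\mathcal{Q}=\mathcal{Q}(\epsilon)$ is the collection of closed cubes $\{x\in\mathbb{R}^n: j_i\frac{\epsilon}{2\sqrt n}\le x_i\le (j_i+1)\frac{\epsilon}{2\sqrt n},\ i=1,\dots,n\}$, $j\in\mathbb{Z}^n$. For a cube $S\in\mathcal{Q}$ and integer $m\ge0$, $S^m=\{x\in\mathbb{R}^n:\max_i|x_i-s_i|\le m\frac{\epsilon}{2\sqrt n}\text{ for some }s\in S\}$. For $B\subset\mathbb{R}^n$, $\mathcal{I}(B)=\{S\in\mathcal{Q}: S\cap B\ne\emptyset\}$, and for $Y\subset\mathbb{R}^n$, $Y_B=Y\cap B$. A cube $S\in\mathcal{I}(A)$ is an interior cube of $A$ if $S^1\cap X\subset A$ and every cube $T\in\mathcal{Q}$ with $T\subset S^1$ lies in $\mathcal{I}(A)$; otherwise $S\in\mathcal{I}(A)$ is a boundary cube of $A$. The boundary $\partial A$ is the union of all boundary cubes of $A$. For $Y\subset\mathbb{R}^n$ and integer $N\ge0$,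 the $N$-extension is $Y^N=\bigcup_{S\in\mathcal{I}(Y)}S^N$. Thus $(\partial A)^N_A=(\partial A)^N\cap A$ and $(\partial A)_A=\partial A\cap A$. $\mathfrak{n}$ is the smallest integer with $\mathfrak{n}\ge\sqrt n-1$. *)

(* Defs.v *)
From HB Require Import structures.
From mathcomp Require Import all_boot all_order all_algebra.
From mathcomp Require Import classical_sets cardinality reals.
Set Implicit Arguments. Unset Strict Implicit. Unset Printing Implicit Defensive.
Import Order.TTheory GRing.Theory Num.Theory.
Local Open Scope ring_scope.
Local Open Scope classical_set_scope.

Section Cubes.
Variables (R : realType) (n : nat).

Definition side (eps : R) : R := eps / (2 * Num.sqrt (n%:R)).

Definition dist (p q : 'rV[R]_n) : R :=
  Num.sqrt (\sum_(i < n) (p ord0 i - q ord0 i) ^+ 2).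

Definition cube (eps : R) (j : 'I_n -> int) : set 'rV[R]_n :=
  [set x | forall i : 'I_n,
     (j i)%:~R * side eps <= x ord0 i <= ((j i)%:~R + 1) * side eps].

Definition cube_ext (eps : R) (m : nat) (j : 'I_n -> int) : set 'rV[R]_n :=
  [set x | exists s, cube eps j s /\
     forall i : 'I_n, `|x ord0 i - s ord0 i| <= m%:R * side eps].

Definition meets (eps : R) (B : set 'rV[R]_n) : set ('I_n -> int) :=
  [set j | exists y, cube eps j y /\ B y].

Definition interior_cube (eps : R) (X A : set 'rV[R]_n) (j : 'I_n -> int) : Prop :=
  meets eps A j /\
  (cube_ext eps 1 j `&` X `<=` A) /\
  (forall k, cube eps k `<=` cube_ext eps 1 j -> meets eps A k).

Definition boundary_cube (eps : R) (X A : set 'rV[R]_n) (j : 'I_n -> int) : Prop :=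
  meets eps A j /\ ~ interior_cube eps X A j.

Definition boundary (eps : R) (X A : set 'rV[R]_n) : set 'rV[R]_n :=
  [set y | exists j, boundary_cube eps X A j /\ cube eps j y].

Definition extension (eps : R) (Y : set 'rV[R]_n) (N : nat) : set 'rV[R]_n :=
  [set y | exists j, meets eps Y j /\ cube_ext eps N j y].

End Cubes.

(* frak n : smallest integer >= sqrt n - 1 (nonnegative for n >= 1) *)
Definition nfrak (R : realType) (n : nat) : nat :=
  `| Num.ceil (Num.sqrt (n%:R : R) - 1) |%N.

(* Main.v *)
Require Import Defs.
From HB Require Import structures.
From mathcomp Require Import all_boot all_order all_algebra.
From mathcomp Require Import boolp classical_sets cardinality reals.
From mathcomp Require Import ring lra zify.
Set Implicit Arguments. Unset Strict Implicit. Unset Printing Implicit Defensive.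
Import Order.TTheory GRing.Theory Num.Theory.
Local Open Scope ring_scope.
Local Open Scope classical_set_scope.

Section Metric.
Variables (R : realType) (n : nat).

Lemma sumsq_ge0 (a : 'I_n -> R) : 0 <= \sum_i a i ^+ 2.
Proof. by apply: sumr_ge0 => i _; rewrite sqr_ge0. Qed.

Lemma CS (a b : 'I_n -> R) :
  \sum_i a i * b i <= Num.sqrt (\sum_i a i ^+ 2) * Num.sqrt (\sum_i b i ^+ 2).
Proof.
set A := \sum_i a i ^+ 2; set B := \sum_i b i ^+ 2.
have A0 : 0 <= A by apply: sumsq_ge0.
have B0 : 0 <= B by apply: sumsq_ge0.
set u := Num.sqrt A; set v := Num.sqrt B.
have u2 : u ^+ 2 = A by rewrite sqr_sqrtr.
have v2 : v ^+ 2 = B by rewrite sqr_sqrtr.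
have u0 : 0 <= u by apply: sqrtr_ge0.
have v0 : 0 <= v by apply: sqrtr_ge0.
have e : forall i, (a i * v - b i * u) ^+ 2 =
   v ^+ 2 * a i ^+ 2 + u ^+ 2 * b i ^+ 2 - (2 * u * v) * (a i * b i).
  by move=> i; ring.
have S0 : 0 <= \sum_i (a i * v - b i * u) ^+ 2 by apply: sumsq_ge0.
rewrite (eq_bigr _ (fun i _ => e i)) sumrB big_split /= -!mulr_sumr -/A -/B in S0.
set C := \sum_i a i * b i in S0 *.
have key : u * v * C <= u * v * (u * v).
  rewrite -u2 -v2 in S0; nra.
have [uv0|] := eqVneq (u * v) 0.
  have : (u == 0) || (v == 0) by rewrite -mulf_eq0 uv0.
  case/orP=> /eqP z.
    have : A = 0 by rewrite -u2 z expr0n.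
    move/eqP; rewrite psumr_eq0 => [/allP H|i _]; last by rewrite sqr_ge0.
    rewrite /C big1 ?uv0 // => i _.
    have := H i (mem_index_enum i); rewrite /= sqrf_eq0 => /eqP ->; by rewrite mul0r.
  have : B = 0 by rewrite -v2 z expr0n.
  move/eqP; rewrite psumr_eq0 => [/allP H|i _]; last by rewrite sqr_ge0.
  rewrite /C big1 ?uv0 // => i _.
  have := H i (mem_index_enum i); rewrite /= sqrf_eq0 => /eqP ->; by rewrite mulr0.
move=> uvn0.
have uvp : 0 < u * v by rewrite lt_neqAle eq_sym uvn0 mulr_ge0.
by rewrite -(ler_pM2l uvp).
Qed.

Lemma minkowski (a b : 'I_n -> R) :
  Num.sqrt (\sum_i (a i + b i) ^+ 2) <=
  Num.sqrt (\sum_i a i ^+ 2) + Num.sqrt (\sum_i b i ^+ 2).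
Proof.
set u := Num.sqrt _ + _.
have u0 : 0 <= u by rewrite addr_ge0 ?sqrtr_ge0.
rewrite -(ger0_norm u0) -sqrtr_sqr; apply: ler_wsqrtr.
have e : forall i, (a i + b i) ^+ 2 = a i ^+ 2 + b i ^+ 2 + 2 * (a i * b i).
  by move=> i; ring.
rewrite (eq_bigr _ (fun i _ => e i)) !big_split /= -mulr_sumr.
have := CS a b.
rewrite /u sqrrD !sqr_sqrtr ?sumsq_ge0 //.
lra.
Qed.


Lemma dist_tri (a q x : 'rV[R]_n) : dist a x <= dist a q + dist q x.
Proof.
rewrite /dist.
have -> : \sum_(i < n) (a ord0 i - x ord0 i) ^+ 2 =
  \sum_(i < n) ((a ord0 i - q ord0 i) + (q ord0 i - x ord0 i)) ^+ 2.
  by apply: eq_bigr => i _; congr (_ ^+ 2); ring.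
exact: (minkowski (fun i => a ord0 i - q ord0 i) (fun i => q ord0 i - x ord0 i)).
Qed.

Lemma dist_seg (p x : 'rV[R]_n) (t : R) : 0 <= t <= 1 ->
  dist p x = dist p (p + t *: (x - p)) + dist (p + t *: (x - p)) x.
Proof.
case/andP=> t0 t1; rewrite /dist.
have -> : \sum_(i < n) (p ord0 i - (p + t *: (x - p)) ord0 i) ^+ 2 =
   t ^+ 2 * \sum_(i < n) (p ord0 i - x ord0 i) ^+ 2.
  by rewrite mulr_sumr; apply: eq_bigr => i _; rewrite !mxE; ring.
have -> : \sum_(i < n) ((p + t *: (x - p)) ord0 i - x ord0 i) ^+ 2 =
   (1 - t) ^+ 2 * \sum_(i < n) (p ord0 i - x ord0 i) ^+ 2.
  by rewrite mulr_sumr; apply: eq_bigr => i _; rewrite !mxE; ring.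
rewrite (sqrtrM _ (sqr_ge0 t)) (sqrtrM _ (sqr_ge0 (1 - t))) !sqrtr_sqr !ger0_norm ?subr_ge0 //; ring.
Qed.

Lemma dist_coord (p q : 'rV[R]_n) i : `|p ord0 i - q ord0 i| <= dist p q.
Proof.
rewrite /dist -(sqrtr_sqr (p ord0 i - q ord0 i)); apply: ler_wsqrtr.
rewrite (bigD1 i) //= lerDl; apply: sumr_ge0 => k _; exact: sqr_ge0.
Qed.

Lemma dist_le_box (a q : 'rV[R]_n) (c : R) : 0 <= c ->
  (forall i, `|a ord0 i - q ord0 i| <= c) -> dist a q <= Num.sqrt n%:R * c.
Proof.
move=> c0 H; rewrite /dist -(ger0_norm c0) -sqrtr_sqr -sqrtrM ?ler0n //.
apply: ler_wsqrtr.
have -> : n%:R * c ^+ 2 = \sum_(i < n) c ^+ 2 by rewrite sumr_const card_ord mulr_natl.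
apply: ler_sum => i _; have h := H i; rewrite -real_normK ?num_real //.
have h0 := normr_ge0 (a ord0 i - q ord0 i); nra.
Qed.

End Metric.

Lemma intS (R : realType) (j : int) : (j + 1)%:~R = j%:~R + 1 :> R.
Proof. by rewrite intrD. Qed.
Lemma intP1 (R : realType) (j : int) : (j - 1)%:~R = j%:~R - 1 :> R.
Proof. by rewrite intrB. Qed.

Lemma coord_ext (R : realType) (s : R) (N : nat) (j : int) (q p : R) :
  0 < s -> j%:~R * s <= q <= (j%:~R + 1) * s ->
  `|p - q| <= (N.+1)%:R * s ->
  exists t : int * R * R,
    [/\ t.1.1%:~R * s <= t.1.2 <= (t.1.1%:~R + 1) * s,
        t.1.1%:~R * s <= t.2 <= (t.1.1%:~R + 1) * s,
        j%:~R * s <= t.2 <= (j%:~R + 1) * s &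
        `|p - t.1.2| <= N%:R * s].
Proof.
move=> s0 /andP[q1 q2] hp.
have := hp; rewrite ler_norml => /andP[h1 h2].
rewrite -natr1 mulrDl mul1r in h1 h2.
set J := j%:~R in q1 q2 *.
have Ns : 0 <= N%:R * s by rewrite mulr_ge0 ?ler0n ?ltW.
case: (ltP p (J * s)) => pl.
  case: (ltP p ((J - 1) * s)) => pl2.
    exists (j - 1, (J - 1) * s, J * s); rewrite /= intP1 -/J; split.
    - by apply/andP; split; nra.
    - by apply/andP; split; nra.
    - by apply/andP; split; nra.
    - by rewrite ler_norml; apply/andP; split; nra.
  exists (j - 1, p, J * s); rewrite /= intP1 -/J; split.
  - by apply/andP; split; nra.
  - by apply/andP; split; nra.
  - by apply/andP; split; nra.
  - by rewrite subrr normr0.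
case: (ltP ((J + 1) * s) p) => pr.
  case: (ltP ((J + 2) * s) p) => pr2.
    exists (j + 1, (J + 2) * s, (J + 1) * s); rewrite /= intS -/J; split.
    - by apply/andP; split; nra.
    - by apply/andP; split; nra.
    - by apply/andP; split; nra.
    - by rewrite ler_norml; apply/andP; split; nra.
  exists (j + 1, p, (J + 1) * s); rewrite /= intS -/J; split.
  - by apply/andP; split; nra.
  - by apply/andP; split; nra.
  - by apply/andP; split; nra.
  - by rewrite subrr normr0.
exists (j, p, p); rewrite /= -/J; split.
- by apply/andP; split.
- by apply/andP; split.
- by apply/andP; split.
- by rewrite subrr normr0.
Qed.

Lemma ext_close (R : realType) (n : nat) (eps : R) (X A : set 'rV[R]_n) (N : nat)
   (j : 'I_n -> int) (q p : 'rV[R]_n) :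
  0 < side n eps -> boundary_cube eps X A j -> cube eps j q ->
  (forall i, `|p ord0 i - q ord0 i| <= (N.+1)%:R * side n eps) ->
  extension eps (boundary eps X A) N p.
Proof.
move=> s0 bj qj hp.
have : forall i, exists t : int * R * R,
    [/\ t.1.1%:~R * side n eps <= t.1.2 <= (t.1.1%:~R + 1) * side n eps,
        t.1.1%:~R * side n eps <= t.2 <= (t.1.1%:~R + 1) * side n eps,
        (j i)%:~R * side n eps <= t.2 <= ((j i)%:~R + 1) * side n eps &
        `|p ord0 i - t.1.2| <= N%:R * side n eps].
  by move=> i; apply: coord_ext => //; apply: qj.
case/choice => T HT.
exists (fun i => (T i).1.1); split.
  exists (\row_i (T i).2); split.
    by move=> i; rewrite mxE; case: (HT i).
  exists j; split => // i; rewrite mxE; by case: (HT i).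
exists (\row_i (T i).1.2); split.
  by move=> i; rewrite mxE; case: (HT i).
by move=> i; rewrite mxE; case: (HT i).
Qed.

Definition ci (R : realType) (n : nat) (s : R) (y : 'rV[R]_n) : 'I_n -> int :=
  fun i => Num.floor (y ord0 i / s).

Lemma floor_bounds (R : realType) (s v : R) : 0 < s ->
  (Num.floor (v / s))%:~R * s <= v < ((Num.floor (v / s))%:~R + 1) * s.
Proof.
move=> s0; have /andP[h1 h2] := floor_itv (v / s).
rewrite intS in h2.
by rewrite -ler_pdivlMr // -ltr_pdivrMr // h1 h2.
Qed.

Lemma cube_ci (R : realType) (n : nat) (eps : R) (y : 'rV[R]_n) :
  0 < side n eps -> cube eps (ci (side n eps) y) y.
Proof.
move=> s0 i; have /andP[h1 h2] := floor_bounds (y ord0 i) s0.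
by rewrite /ci h1 ltW.
Qed.

Lemma nbr1 (R : realType) (s : R) (F F' : int) (z : R) :
  0 < s -> (F' <= F + 1)%R -> (F - 1 <= F')%R ->
  F'%:~R * s <= z <= (F'%:~R + 1) * s ->
  exists w, F%:~R * s <= w <= (F%:~R + 1) * s /\ `|z - w| <= 1%:R * s.
Proof.
move=> s0 h1 h2 /andP[z1 z2].
rewrite -(ler_int R) intS in h1; rewrite -(ler_int R) intP1 in h2.
have a1 : F'%:~R * s <= (F%:~R + 1) * s by rewrite ler_pM2r.
have a2 : (F%:~R - 1) * s <= F'%:~R * s by rewrite ler_pM2r.
case: (ltP z (F%:~R * s)) => c1.
  exists (F%:~R * s); split; first by apply/andP; split; nra.
  by rewrite ler_norml; apply/andP; split; nra.
case: (ltP ((F%:~R + 1) * s) z) => c2.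
  exists ((F%:~R + 1) * s); split; first by apply/andP; split; nra.
  by rewrite ler_norml; apply/andP; split; nra.
exists z; split; first by apply/andP; split.
by rewrite subrr normr0 mul1r ltW.
Qed.

Lemma nbr (R : realType) (n : nat) (eps : R) (y y' : 'rV[R]_n) :
  0 < side n eps -> (forall i, `|y ord0 i - y' ord0 i| <= side n eps) ->
  cube eps (ci (side n eps) y') `<=` cube_ext eps 1 (ci (side n eps) y).
Proof.
move=> s0 hy z hz.
have : forall i, exists w, (ci (side n eps) y i)%:~R * side n eps <= w <=
    ((ci (side n eps) y i)%:~R + 1) * side n eps /\
    `|z ord0 i - w| <= 1%:R * side n eps.
  move=> i; apply: (nbr1 (F' := ci (side n eps) y' i)) => //.
  - have /andP[a1 a2] := floor_bounds (y ord0 i) s0.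
    have /andP[b1 b2] := floor_bounds (y' ord0 i) s0.
    have := hy i; rewrite ler_norml => /andP[c1 c2].
    have : (Num.floor (y' ord0 i / side n eps))%:~R < (Num.floor (y ord0 i / side n eps))%:~R + 2 :> R.
      rewrite -(ltr_pM2r s0); nra.
    rewrite /ci -[2]/(2%:~R) -intrD ltr_int; lia.
  - have /andP[a1 a2] := floor_bounds (y ord0 i) s0.
    have /andP[b1 b2] := floor_bounds (y' ord0 i) s0.
    have := hy i; rewrite ler_norml => /andP[c1 c2].
    have : (Num.floor (y ord0 i / side n eps))%:~R < (Num.floor (y' ord0 i / side n eps))%:~R + 2 :> R.
      rewrite -(ltr_pM2r s0); nra.
    rewrite /ci -[2]/(2%:~R) -intrD ltr_int; lia.
case/choice => W HW.
exists (\row_i W i); split; move=> i; rewrite mxE; by case: (HW i).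
Qed.

Lemma nfrak_ge (R : realType) (n : nat) : (0 < n)%N ->
  Num.sqrt (n%:R : R) <= (nfrak R n)%:R + 1.
Proof.
move=> n0; rewrite /nfrak natr_absz ger0_norm; last first.
  by rewrite ceil_ge0 ltrBrDl subrr sqrtr_gt0 ltr0n.
have := ceil_ge (Num.sqrt (n%:R : R) - 1); lra.
Qed.

Lemma hit (R : realType) (n : nat) (eps : R) (X A : set 'rV[R]_n) (x p : 'rV[R]_n)
   (r : nat) (t : R) (j : 'I_n -> int) :
  (0 < n)%N -> 0 < side n eps ->
  A p -> ~ (extension eps (boundary eps X A) (nfrak R n + r) `&` A) p ->
  0 <= t <= 1 -> boundary_cube eps X A j -> cube eps j (p + t *: (x - p)) ->
  exists a, (boundary eps X A `&` A) a /\ dist a x + r%:R * side n eps < dist p x.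
Proof.
move=> n0 s0 Ap next t01 bj qj.
set q := p + t *: (x - p) in qj.
case: (bj) => -[a [ja Aa]] _.
exists a; split; first by split => //; exists j.
have [i hi] : exists i, ~ (`|p ord0 i - q ord0 i| <= (nfrak R n + r).+1%:R * side n eps).
  apply/existsNP => H; apply: next; split => //.
  exact: (ext_close s0 bj qj H).
have {}hi : (nfrak R n + r).+1%:R * side n eps < `|p ord0 i - q ord0 i|.
  by rewrite ltNge; apply/negP.
have dpq := dist_coord p q i.
have daq : dist a q <= Num.sqrt n%:R * side n eps.
  apply: dist_le_box; first exact: ltW.
  move=> k; have /andP[a1 a2] := ja k; have /andP[b1 b2] := qj k.
  rewrite mulrDl mul1r in a2 b2.
  by rewrite ler_norml; apply/andP; split; lra.
have tri := dist_tri a q x.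
have seg := dist_seg p x t01.
rewrite -/q in seg.
have nf := nfrak_ge R n0.
have h1 : Num.sqrt n%:R * side n eps <= ((nfrak R n)%:R + 1) * side n eps.
  by rewrite ler_pM2r.
rewrite -addn1 !natrD in hi.
rewrite mulrDl in h1.
rewrite !mulrDl in hi.
lra.
Qed.

Lemma part1 (R : realType) (n : nat) (eps : R) (X A : set 'rV[R]_n) (x p : 'rV[R]_n)
   (r : nat) :
  (0 < n)%N -> 0 < side n eps -> X x -> ~ A x ->
  A p -> ~ (extension eps (boundary eps X A) (nfrak R n + r) `&` A) p ->
  exists a, (boundary eps X A `&` A) a /\ dist a x + r%:R * side n eps < dist p x.
Proof.
move=> n0 s0 Xx nAx Ap next.
set s := side n eps in s0 *.
set P := exists a, _.
set M := \sum_(i < n) `|x ord0 i - p ord0 i|.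
set N := (Num.truncn (M / s)).+1.
have N0 : 0 < N%:R :> R by rewrite ltr0n.
have MN : M < N%:R * s by rewrite -ltr_pdivrMr // truncnS_gt.
pose y (k : nat) := p + (k%:R / N%:R) *: (x - p).
have step : forall k i, `|y k ord0 i - y k.+1 ord0 i| <= s.
  move=> k i.
  have -> : y k ord0 i - y k.+1 ord0 i = - ((x ord0 i - p ord0 i) / N%:R).
    rewrite /y !mxE -[k.+1]addn1 natrD; field; by rewrite lt0r_neq0.
  have Ni : 0 <= (N%:R : R)^-1 by rewrite invr_ge0 ltW.
  rewrite normrN normrM (ger0_norm Ni).
  rewrite ler_pdivrMr //.
  have : `|x ord0 i - p ord0 i| <= M.
    rewrite /M (bigD1 i) //= lerDl; apply: sumr_ge0 => k' _; exact: normr_ge0.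
  rewrite mulrC in MN; lra.
have claim : forall k, (k <= N)%N -> interior_cube eps X A (ci s (y k)) \/ P.
  elim=> [_|k IH kN].
    have y0 : y 0%N = p by rewrite /y mul0r scale0r addr0.
    rewrite y0; case: (pselect (interior_cube eps X A (ci s p))) => [|ni]; first by left.
    exfalso; apply: next; split => //.
    exists (ci s p); split.
      exists p; split; first exact: cube_ci.
      exists (ci s p); split; last exact: cube_ci.
      split => //; exists p; split => //; exact: cube_ci.
    exists p; split; first exact: cube_ci.
    by move=> i; rewrite subrr normr0 mulr_ge0 ?ler0n ?ltW.
  case: (IH (ltnW kN)) => [hint|]; last by right.
  have mA : Defs.meets eps A (ci s (y k.+1)).
    case: hint => _ [_ H]; apply: H; exact: nbr (step k).
  case: (pselect (interior_cube eps X A (ci s (y k.+1)))) => [|ni]; first by left.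
  right; apply: (@hit _ _ _ _ _ x p r (k.+1%:R / N%:R) (ci s (y k.+1))) => //.
  - apply/andP; split; first by rewrite divr_ge0 ?ler0n ?ltW.
    by rewrite ler_pdivrMr // mul1r ler_nat.
  - exact: cube_ci.
case: (claim N (leqnn N)) => // hint.
have yN : y N = x by rewrite /y divff ?lt0r_neq0 // scale1r addrC subrK.
rewrite yN in hint.
exfalso; apply: nAx; case: hint => _ [H _]; apply: H; split => //.
exists x; split; first exact: cube_ci.
by move=> i; rewrite subrr normr0 mulr_ge0 ?ler0n ?ltW.
Qed.

Theorem proposition4p2 (R : realType) (n : nat) (X A : set 'rV[R]_n) (eps : R) :
  (2 <= n)%N -> finite_set X -> 0 < eps -> A `<=` X ->
  (forall (x : 'rV[R]_n) (r : nat), X x -> ~ A x ->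
     forall p : 'rV[R]_n,
       A p -> ~ (extension eps (boundary eps X A) (nfrak R n + r) `&` A) p ->
       exists a : 'rV[R]_n, (boundary eps X A `&` A) a /\
         dist a x + r%:R * side n eps < dist p x)
  /\
  (forall x p : 'rV[R]_n, X x -> ~ A x -> A p ->
     exists a : 'rV[R]_n, (extension eps (boundary eps X A) (nfrak R n) `&` A) a /\
       dist a x <= dist p x).
Proof.
move=> n2 _ e0 _.
have n0 : (0 < n)%N by apply: leq_trans n2.
have s0 : 0 < side n eps.
  by rewrite /side divr_gt0 // mulr_gt0 // sqrtr_gt0 ltr0n.
split.
  move=> x r Xx nAx p Ap next; exact: part1.
move=> x p Xx nAx Ap.
case: (pselect ((extension eps (boundary eps X A) (nfrak R n) `&` A) p)) => H.
  by exists p; split.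
have H' : ~ (extension eps (boundary eps X A) (nfrak R n + 0) `&` A) p.
  by rewrite addn0.
have [a [[ba Aa] da]] := part1 n0 s0 Xx nAx Ap H'.
exists a; split; last by move: da; rewrite mul0r addr0 => /ltW.
split => //.
case: ba => j [bj ja].
exists j; split.
  exists a; split => //; by exists j.
exists a; split => //.
by move=> i; rewrite subrr normr0 mulr_ge0 ?ler0n ?ltW.
Qed.
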